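(* Let $L$ be a Hausdorff co-Heyting algebra and $I$ an ideal of $L$. The quotient co-Heyting algebra $L/I$ is Hausdorff if and only if $I$ is closed in the codimetric topology of $L$. In particular, the quotient of a Hausdorff co-Heyting algebra by a principal ideal is Hausdorff.
   Context: A co-Heyting algebra is a bounded distributive lattice $(L,0,1,\vee,\wedge)$ such that $a-b=\min\{c\in L: a\le b\vee c\}$ exists for all $a,b$. Let $a\triangle b=(a-b)\vee(b-a)$; for an ideal $I$, $L/I$ is the quotient by the congruence $a\equiv_I b\iff a\triangle b\in I$, itself a co-Heyting algebra. $\operatorname{Spec}L$ is the set of prime filters ordered by inclusion; the height of a prime filter is its foundation rank there; $\operatorname{codim}_L a=\min\{\operatorname{height}\mathfrak p: a\in\mathfrak p\in\operatorname{Spec}L\}$ ($+\infty$ if none). The codimetric pseudometric is $\operatorname{dist}_L(a,b)=2^{-\operatorname{codim}_L(a\triangle b)}$ if $\operatorname{codim}_L(a\triangle b)$ is finite and $0$ otherwise; the codimetric topology is the topology it defines. $L$ is called Hausdorff if its codimetric topology is Hausdorff, equivalently if every nonzero element of $L$ has finite codimension. *)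

(* Defs.v *)
From Stdlib Require Import Reals Lra Arith Wf_nat Classical ClassicalEpsilon.
Open Scope R_scope.

Record CoHOps (T : Type) := {
  cbot : T; ctop : T;
  cjoin : T -> T -> T; cmeet : T -> T -> T;
  cdiff : T -> T -> T
}.
Arguments cbot {T}. Arguments ctop {T}. Arguments cjoin {T}.
Arguments cmeet {T}. Arguments cdiff {T}.

Section CoH.
Context {T : Type} (L : CoHOps T).

Local Notation "a ∨ b" := (cjoin L a b) (at level 50).
Local Notation "a ∧ b" := (cmeet L a b) (at level 40).

Definition cle (a b : T) : Prop := cjoin L a b = b.

Definition is_coHeyting : Prop :=
  (forall a b c, cjoin L a (cjoin L b c) = cjoin L (cjoin L a b) c) /\
  (forall a b c, cmeet L a (cmeet L b c) = cmeet L (cmeet L a b) c) /\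
  (forall a b, cjoin L a b = cjoin L b a) /\
  (forall a b, cmeet L a b = cmeet L b a) /\
  (forall a b, cjoin L a (cmeet L a b) = a) /\
  (forall a b, cmeet L a (cjoin L a b) = a) /\
  (forall a b c, cmeet L a (cjoin L b c) = cjoin L (cmeet L a b) (cmeet L a c)) /\
  (forall a, cjoin L a (cbot L) = a) /\
  (forall a, cmeet L a (ctop L) = a) /\
  (forall a b, cle a (cjoin L b (cdiff L a b)) /\
               forall c, cle a (cjoin L b c) -> cle (cdiff L a b) c).

Definition symd (a b : T) : T := cjoin L (cdiff L a b) (cdiff L b a).

Definition is_ideal (I : T -> Prop) : Prop :=
  I (cbot L) /\
  (forall a b, cle a b -> I b -> I a) /\
  (forall a b, I a -> I b -> I (cjoin L a b)).

Definition principal_ideal (a : T) : T -> Prop := fun b => cle b a.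

Definition prime_filter (F : T -> Prop) : Prop :=
  F (ctop L) /\ ~ F (cbot L) /\
  (forall a b, cle a b -> F a -> F b) /\
  (forall a b, F a -> F b -> F (cmeet L a b)) /\
  (forall a b, F (cjoin L a b) -> F a \/ F b).

Definition sincl (F G : T -> Prop) : Prop :=
  (forall x, F x -> G x) /\ exists x, G x /\ ~ F x.

(** height_le n p : the foundation rank (height) of p in Spec L is <= n,
    i.e. every prime filter strictly below p has height <= n-1
    (and for n = 0, p is minimal). *)
Fixpoint height_le (n : nat) (p : T -> Prop) : Prop :=
  forall q, prime_filter q -> sincl q p ->
    match n with O => False | S m => height_le m q end.

(** "codim a <= n": some prime filter containing a has height <= n *)
Definition codim_le (a : T) (n : nat) : Prop :=
  exists p, prime_filter p /\ p a /\ height_le n p.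

Lemma least_nat (P : nat -> Prop) :
  (exists n, P n) -> exists n, P n /\ forall m, P m -> (n <= m)%nat.
Proof.
  intros H.
  destruct (dec_inh_nat_subset_has_unique_least_element P
              (fun n => classic (P n)) H) as [n [[Hn Hl] _]].
  exists n; split; assumption.
Qed.

(** codimension of a, in nat ∪ {+oo} (None = +oo) *)
Definition codim (a : T) : option nat :=
  match excluded_middle_informative (exists n, codim_le a n) with
  | left h => Some (proj1_sig (constructive_indefinite_description _
                                 (least_nat _ h)))
  | right _ => None
  end.

Definition cdist (a b : T) : R :=
  match codim (symd a b) with
  | Some n => / (2 ^ n)
  | None => 0
  end.

Definition copen (U : T -> Prop) : Prop :=
  forall x, U x -> exists e, e > 0 /\ forall y, cdist x y < e -> U y.

Definition cclosed (C : T -> Prop) : Prop := copen (fun x => ~ C x).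

Definition Hausdorff : Prop :=
  forall x y, x <> y ->
    exists U V, copen U /\ copen V /\ U x /\ V y /\ forall z, ~ (U z /\ V z).

Definition cong (I : T -> Prop) (a b : T) : Prop := I (symd a b).

Definition quot (I : T -> Prop) : Type :=
  { C : T -> Prop | exists a, C = cong I a }.

Definition qcls (I : T -> Prop) (a : T) : quot I :=
  exist _ (cong I a) (ex_intro _ a eq_refl).

Definition qrep (I : T -> Prop) (X : quot I) : T :=
  proj1_sig (constructive_indefinite_description _ (proj2_sig X)).

Definition quot_ops (I : T -> Prop) : CoHOps (quot I) := {|
  cbot := qcls I (cbot L);
  ctop := qcls I (ctop L);
  cjoin := fun X Y => qcls I (cjoin L (qrep I X) (qrep I Y));
  cmeet := fun X Y => qcls I (cmeet L (qrep I X) (qrep I Y));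
  cdiff := fun X Y => qcls I (cdiff L (qrep I X) (qrep I Y)) |}.

End CoH.

(* Main.v *)
Require Import Defs.
From Stdlib Require Import Reals Lra Lia Arith Classical FunctionalExtensionality PropExtensionality ProofIrrelevance ClassicalEpsilon.
From mathcomp Require boolp classical_sets.

Lemma zorn_prop (U : Type) (R : U -> U -> Prop) :
  (forall t, R t t) -> (forall r s t, R r s -> R s t -> R r t) ->
  (forall s t, R s t -> R t s -> s = t) ->
  (forall A : U -> Prop, (forall s t, A s -> A t -> R s t \/ R t s) ->
      exists t, forall s, A s -> R s t) ->
  exists t, forall s, R t s -> s = t.
Proof.
  intros Rr Rt Ra Rc.
  destruct (@classical_sets.Zorn U (fun x y => boolp.asbool (R x y))) as [t Ht].
  - intro t; apply boolp.asboolT; auto.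
  - intros r s t H1 H2; apply boolp.asboolT; apply boolp.asboolW in H1; apply boolp.asboolW in H2; eauto.
  - intros s t H1 H2; apply boolp.asboolW in H1; apply boolp.asboolW in H2; eauto.
  - intros A HA. destruct (Rc A) as [t Ht].
    + intros s t Hs Htt. destruct (HA s t Hs Htt) as [h|h]; apply boolp.asboolW in h; auto.
    + exists t; intros s Hs; apply boolp.asboolT; auto.
  - exists t; intros s Hs; apply Ht; apply boolp.asboolT; auto.
Qed.

Section Alg.
Context {T : Type} (L : CoHOps T) (HL : is_coHeyting L).

Local Notation J := (cjoin L).
Local Notation M := (cmeet L).
Local Notation D := (cdiff L).
Local Notation z := (cbot L).
Local Notation o := (ctop L).
Local Notation le := (cle L).

Lemma jA a b c : J a (J b c) = J (J a b) c. Proof. apply HL. Qed.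
Lemma mA a b c : M a (M b c) = M (M a b) c. Proof. apply HL. Qed.
Lemma jC a b : J a b = J b a. Proof. apply HL. Qed.
Lemma mC a b : M a b = M b a. Proof. apply HL. Qed.
Lemma jabs a b : J a (M a b) = a. Proof. apply HL. Qed.
Lemma mabs a b : M a (J a b) = a. Proof. apply HL. Qed.
Lemma mdist a b c : M a (J b c) = J (M a b) (M a c). Proof. apply HL. Qed.
Lemma j0 a : J a z = a. Proof. apply HL. Qed.
Lemma m1 a : M a o = a. Proof. apply HL. Qed.
Lemma dif_le a b : le a (J b (D a b)). Proof. apply HL. Qed.
Lemma dif_min a b c : le a (J b c) -> le (D a b) c. Proof. apply HL. Qed.

Lemma jid a : J a a = a.
Proof. pose proof (jabs a (J a a)) as H. rewrite mabs in H. exact H. Qed.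
Lemma mid a : M a a = a.
Proof. pose proof (mabs a (M a a)) as H. rewrite jabs in H. exact H. Qed.

Lemma le_refl a : le a a. Proof. apply jid. Qed.
Lemma le_trans a b c : le a b -> le b c -> le a c.
Proof. unfold cle; intros H1 H2. rewrite <- H2, jA, H1. reflexivity. Qed.
Lemma le_antisym a b : le a b -> le b a -> a = b.
Proof. unfold cle; intros H1 H2. rewrite <- H1, jC. auto. Qed.
Lemma le_jl a b : le a (J a b).
Proof. unfold cle. rewrite jA, jid. reflexivity. Qed.
Lemma le_jr a b : le b (J a b).
Proof. rewrite jC. apply le_jl. Qed.
Lemma le_lub a b c : le a c -> le b c -> le (J a b) c.
Proof. unfold cle; intros H1 H2. rewrite <- jA, H2, H1. reflexivity. Qed.
Lemma le_meet a b : le a b <-> M a b = a.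
Proof.
  unfold cle; split; intro H.
  - rewrite <- H. apply mabs.
  - rewrite <- H, jC, mC. apply jabs.
Qed.
Lemma le_ml a b : le (M a b) a.
Proof. apply le_meet. rewrite mC, mA, mid. reflexivity. Qed.
Lemma le_mr a b : le (M a b) b.
Proof. rewrite mC. apply le_ml. Qed.
Lemma le_glb a b c : le c a -> le c b -> le c (M a b).
Proof. rewrite !le_meet; intros H1 H2. rewrite mA, H1, H2. reflexivity. Qed.
Lemma le_0 a : le z a.
Proof. unfold cle. rewrite jC. apply j0. Qed.
Lemma le_1 a : le a o.
Proof. apply le_meet, m1. Qed.
Lemma le_jj a b c d : le a c -> le b d -> le (J a b) (J c d).
Proof. intros; apply le_lub; [eapply le_trans; [eauto|apply le_jl]|eapply le_trans; [eauto|apply le_jr]]. Qed.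
Lemma le_mm a b c d : le a c -> le b d -> le (M a b) (M c d).
Proof. intros; apply le_glb; [eapply le_trans; [apply le_ml|eauto]|eapply le_trans; [apply le_mr|eauto]]. Qed.
Lemma le_jl' a b c : le a b -> le a (J b c).
Proof. intros; eapply le_trans; eauto using le_jl. Qed.
Lemma le_jr' a b c : le a c -> le a (J b c).
Proof. intros; eapply le_trans; eauto using le_jr. Qed.
Lemma le_z a : le a z -> a = z.
Proof. intros; apply le_antisym; auto using le_0. Qed.

Lemma le_mj x i y j : le (M (J x i) (J y j)) (J (M x y) (J i j)).
Proof.
  rewrite mdist. apply le_lub.
  - rewrite mC, mdist. apply le_lub.
    + rewrite mC. apply le_jl.
    + apply le_jr', le_jl'. apply le_mr.
  - apply le_jr', le_jr'. apply le_mr.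
Qed.

Lemma dif_iff a b c : le (D a b) c <-> le a (J b c).
Proof.
  split; [|apply dif_min]. intro H.
  eapply le_trans; [apply dif_le|]. apply le_jj; auto using le_refl.
Qed.
Lemma dif_lea a b : le (D a b) a.
Proof. apply dif_iff, le_jr. Qed.
Lemma dif_z a b : le a b -> D a b = z.
Proof. intro H. apply le_z, dif_iff. rewrite j0. auto. Qed.
Lemma dif_a0 a : D a z = a.
Proof.
  apply le_antisym; [apply dif_lea|].
  eapply le_trans; [apply dif_le|]. rewrite jC, j0. apply le_refl.
Qed.
Lemma dif_mono a a' b : le a a' -> le (D a b) (D a' b).
Proof. intro H; apply dif_iff; eapply le_trans; eauto using dif_le. Qed.
Lemma dif_anti a b b' : le b b' -> le (D a b') (D a b).
Proof. intro H; apply dif_iff; eapply le_trans; [apply (dif_le a b)|apply le_jj; [exact H|apply le_refl]]. Qed.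

Lemma symd_C a b : symd L a b = symd L b a.
Proof. unfold symd. apply jC. Qed.
Lemma symd_aa a : symd L a a = z.
Proof. unfold symd. rewrite dif_z by apply le_refl. apply j0. Qed.
Lemma symd_a0 a : symd L a z = a.
Proof. unfold symd. rewrite dif_a0, (dif_z z) by apply le_0. apply j0. Qed.
Lemma symd_le a b : le a (J b (symd L a b)).
Proof. eapply le_trans; [apply dif_le|]. apply le_jj; [apply le_refl|apply le_jl]. Qed.
Lemma symd_tri x y w : le (symd L x w) (J (symd L x y) (symd L y w)).
Proof.
  unfold symd. apply le_lub.
  - apply dif_iff. eapply le_trans; [apply (dif_le x y)|].
    eapply le_trans; [apply le_jj; [apply (dif_le y w)| apply le_refl]|].
    apply le_lub; [apply le_lub|].
    + apply le_jl.
    + apply le_jr', le_jr', le_jl.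
    + apply le_jr', le_jl', le_jl.
  - apply dif_iff. eapply le_trans; [apply (dif_le w y)|].
    eapply le_trans; [apply le_jj; [apply (dif_le y x)| apply le_refl]|].
    apply le_lub; [apply le_lub|].
    + apply le_jl.
    + apply le_jr', le_jl', le_jr.
    + apply le_jr', le_jr', le_jr.
Qed.
Lemma symd_z a b : symd L a b = z -> a = b.
Proof.
  intro H. apply le_antisym.
  - eapply le_trans; [apply (symd_le a b)|]. rewrite H, j0. apply le_refl.
  - eapply le_trans; [apply (symd_le b a)|]. rewrite symd_C, H, j0. apply le_refl.
Qed.
End Alg.

Section Gen.
Context {St : Type} (Mo : CoHOps St).

Lemma height_mono n p : height_le Mo n p -> height_le Mo (S n) p.
Proof.
  revert p; induction n; intros p H q Hq Hs; simpl in H.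
  - destruct (H q Hq Hs).
  - apply IHn. exact (H q Hq Hs).
Qed.
Lemma height_le_le m n p : (m <= n)%nat -> height_le Mo m p -> height_le Mo n p.
Proof. induction 1; auto using height_mono. Qed.
Lemma height_sub n p q : (forall x, q x -> p x) -> height_le Mo n p -> height_le Mo n q.
Proof.
  intros Hqp H. destruct n; intros r Hr [Hs1 [x [Hx1 Hx2]]]; apply (H r Hr); split; auto; exists x; auto.
Qed.
Lemma codim_le_le a m n : (m <= n)%nat -> codim_le Mo a m -> codim_le Mo a n.
Proof. intros Hmn [p [Hp [Ha Hh]]]. exists p; split; [exact Hp|split; [exact Ha|exact (height_le_le m n p Hmn Hh)]]. Qed.

Lemma codim_spec a :
  (codim Mo a = None /\ forall n, ~ codim_le Mo a n) \/
  (exists m, codim Mo a = Some m /\ codim_le Mo a m /\ forall k, codim_le Mo a k -> (m <= k)%nat).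
Proof.
  unfold codim. destruct (excluded_middle_informative _) as [h|h].
  - right. destruct (constructive_indefinite_description _ _) as [m [Hm1 Hm2]]. simpl.
    exists m; auto.
  - left. split; [reflexivity|]. intros n Hn. apply h. eauto.
Qed.

Lemma inv2_lt m N : / 2 ^ m < / 2 ^ N <-> (N < m)%nat.
Proof.
  split; intro H.
  - destruct (Nat.lt_ge_cases N m) as [h|h]; auto. exfalso.
    assert (2 ^ m <= 2 ^ N) by (apply Rle_pow; lra || auto).
    assert (0 < 2 ^ m) by (apply pow_lt; lra).
    assert (/ 2 ^ N <= / 2 ^ m) by (apply Rinv_le_contravar; auto). lra.
  - apply Rinv_lt_contravar.
    + apply Rmult_lt_0_compat; apply pow_lt; lra.
    + apply Rlt_pow; auto; lra.
Qed.

Lemma cdist_lt x y N : cdist Mo x y < / 2 ^ N <-> ~ codim_le Mo (symd Mo x y) N.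
Proof.
  unfold cdist. destruct (codim_spec (symd Mo x y)) as [[E H]|[m [E [H1 H2]]]]; rewrite E.
  - split; auto. intros _. apply Rinv_0_lt_compat, pow_lt; lra.
  - rewrite inv2_lt. split.
    + intros Hlt Hc. apply H2 in Hc. lia.
    + intros Hc. destruct (Nat.lt_ge_cases N m) as [h|h]; auto. exfalso. apply Hc.
      eapply codim_le_le; eauto.
Qed.

Lemma exists_N e : e > 0 -> exists N, / 2 ^ N < e.
Proof.
  intro He. destruct (Pow_x_infinity 2) with (b := / e + 1) as [N HN].
  - rewrite Rabs_right; lra.
  - exists N. specialize (HN N (le_n N)). rewrite Rabs_right in HN by (left; apply pow_lt; lra).
    assert (0 < / e) by (apply Rinv_0_lt_compat; lra).
    rewrite <- (Rinv_inv e). apply Rinv_lt_contravar.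
    + apply Rmult_lt_0_compat; auto. apply pow_lt; lra.
    + lra.
Qed.

Lemma hausdorff_char :
  (forall x y w n, codim_le Mo (symd Mo x w) n -> codim_le Mo (symd Mo x y) n \/ codim_le Mo (symd Mo y w) n) ->
  (forall x y n, codim_le Mo (symd Mo x y) n -> codim_le Mo (symd Mo y x) n) ->
  (forall x n, ~ codim_le Mo (symd Mo x x) n) ->
  (Hausdorff Mo <-> forall x y, x <> y -> exists n, codim_le Mo (symd Mo x y) n).
Proof.
  intros HU HS HZ. split.
  - intros H x y Hxy. apply NNPP. intro Hn.
    destruct (H x y Hxy) as [U [V [HUo [HVo [Ux [Vy Hd]]]]]].
    destruct (HUo x Ux) as [e [He HB]]. destruct (exists_N e He) as [N HN].
    apply (Hd y). split; auto. apply HB.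
    assert (cdist Mo x y < / 2 ^ N); [|lra].
    apply cdist_lt. intro Hc; apply Hn; eauto.
  - intros H x y Hxy. destruct (H x y Hxy) as [N HN].
    exists (fun w => ~ codim_le Mo (symd Mo x w) N), (fun w => ~ codim_le Mo (symd Mo y w) N).
    repeat split.
    + intros w Hw. exists (/ 2 ^ N). split; [apply Rinv_0_lt_compat, pow_lt; lra|].
      intros v Hv. apply cdist_lt in Hv. intro Hc. destruct (HU x w v N Hc); auto.
    + intros w Hw. exists (/ 2 ^ N). split; [apply Rinv_0_lt_compat, pow_lt; lra|].
      intros v Hv. apply cdist_lt in Hv. intro Hc. destruct (HU y w v N Hc); auto.
    + apply HZ.
    + apply HZ.
    + intros w [H1 H2]. destruct (HU x w y N HN); auto.
Qed.

Lemma closed_char (C : St -> Prop) :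
  cclosed Mo C <-> forall x, ~ C x -> exists N, forall y, ~ codim_le Mo (symd Mo x y) N -> ~ C y.
Proof.
  unfold cclosed, copen. split.
  - intros H x Hx. destruct (H x Hx) as [e [He HB]]. destruct (exists_N e He) as [N HN].
    exists N. intros y Hy. apply HB. apply cdist_lt in Hy. lra.
  - intros H x Hx. destruct (H x Hx) as [N HN]. exists (/ 2 ^ N).
    split; [apply Rinv_0_lt_compat, pow_lt; lra|]. intros y Hy. apply HN, cdist_lt. auto.
Qed.
End Gen.

Section Prime.
Context {T : Type} (L : CoHOps T) (HL : is_coHeyting L).

Local Notation J := (cjoin L).
Local Notation M := (cmeet L).
Local Notation D := (cdiff L).
Local Notation z := (cbot L).
Local Notation o := (ctop L).
Local Notation le := (cle L).

Lemma pf_up p a b : prime_filter L p -> le a b -> p a -> p b.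
Proof. intros Hp; apply Hp. Qed.
Lemma pf_0 p : prime_filter L p -> ~ p z.
Proof. intros Hp; apply Hp. Qed.
Lemma pf_1 p : prime_filter L p -> p o.
Proof. intros Hp; apply Hp. Qed.
Lemma pf_m p a b : prime_filter L p -> p a -> p b -> p (M a b).
Proof. intros Hp; apply Hp. Qed.
Lemma pf_j p a b : prime_filter L p -> p (J a b) -> p a \/ p b.
Proof. intros Hp; apply Hp. Qed.

Lemma pf_le p a b : prime_filter L p -> p a -> p b \/ p (D a b).
Proof. intros Hp Ha. apply (pf_j p); auto. eapply pf_up; eauto. apply (dif_le L HL). Qed.

Lemma codim_up a b n : le a b -> codim_le L a n -> codim_le L b n.
Proof. intros H [p [Hp [Ha Hh]]]. exists p; split; auto. split; auto. eapply pf_up; eauto. Qed.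
Lemma codim_join a b n : codim_le L (J a b) n -> codim_le L a n \/ codim_le L b n.
Proof.
  intros [p [Hp [Ha Hh]]]. destruct (pf_j p a b Hp Ha); [left|right]; exists p; auto.
Qed.
Lemma codim_z n : ~ codim_le L z n.
Proof. intros [p [Hp [Ha Hh]]]. exact (pf_0 p Hp Ha). Qed.

Lemma pit (F K : T -> Prop) :
  F o -> (forall a b, le a b -> F a -> F b) -> (forall a b, F a -> F b -> F (M a b)) ->
  K z -> (forall a b, le a b -> K b -> K a) -> (forall a b, K a -> K b -> K (J a b)) ->
  (forall x, F x -> K x -> False) ->
  exists p, prime_filter L p /\ (forall x, F x -> p x) /\ (forall x, p x -> ~ K x).
Proof.
  intros F1 Fup Fm K0 Kdn Kj FK.
  set (good := fun G : T -> Prop => (forall x, F x -> G x) /\ (forall a b, le a b -> G a -> G b) /\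
                  (forall a b, G a -> G b -> G (M a b)) /\ (forall x, G x -> ~ K x)).
  set (U := {G : T -> Prop | good G}).
  destruct (@zorn_prop U (fun G H => forall x, proj1_sig G x -> proj1_sig H x)) as [[G HG] Hmax].
  - auto.
  - eauto.
  - intros [G1 h1] [G2 h2] H12 H21. simpl in *.
    assert (G1 = G2) by (apply functional_extensionality; intro x; apply propositional_extensionality; split; auto).
    subst G2. f_equal. apply proof_irrelevance.
  - intros A HA.
    set (Un := fun x => F x \/ exists G : U, A G /\ proj1_sig G x).
    assert (HUn : good Un).
    { unfold good, Un. split; [auto|split; [|split]].
      - intros a b Hab [Ha|[G [HAG HGa]]]; [left; eapply Fup; eauto|right; exists G; split; auto].
        destruct G as [G [g1 [g2 [g3 g4]]]]; simpl in *. exact (g2 a b Hab HGa).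
      - intros a b [Ha|[G [HAG HGa]]] [Hb|[G' [HAG' HGb]]].
        + left; auto.
        + right; exists G'; split; auto. destruct G' as [G' [g1 [g2 [g3 g4]]]]; simpl in *.
          apply g3; [apply g1; exact Ha|exact HGb].
        + right; exists G; split; auto. destruct G as [G [g1 [g2 [g3 g4]]]]; simpl in *.
          apply g3; [exact HGa|apply g1; exact Hb].
        + destruct (HA G G' HAG HAG') as [h|h].
          * right; exists G'; split; auto. specialize (h a HGa).
            destruct G' as [G' [g1 [g2 [g3 g4]]]]; simpl in *. apply g3; auto.
          * right; exists G; split; auto. specialize (h b HGb).
            destruct G as [G [g1 [g2 [g3 g4]]]]; simpl in *. apply g3; auto.
      - intros x [Hx|[G [HAG HGx]]] Hk; [eapply FK; eauto|].
        destruct G as [G [g1 [g2 [g3 g4]]]]; simpl in *. exact (g4 x HGx Hk). }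
    exists (exist _ Un HUn). intros s Hs x Hx. simpl. right. exists s; auto.
  - destruct HG as [GF [Gup [Gm GK]]].
    exists G. split; [|split; auto].
    repeat split; auto.
    + intro H0. exact (GK z H0 K0).
    + intros b c Hbc. apply NNPP. intro Hn. apply not_or_and in Hn. destruct Hn as [Hb Hc].
      assert (Hext : forall d, ~ G d -> exists g, G g /\ K (M g d)).
      { intros d Hd. apply NNPP. intro Hn.
        set (Gd := fun x => exists g, G g /\ le (M g d) x).
        assert (HGd : good Gd).
        { unfold good, Gd. split; [|split; [|split]].
          - intros x Fx. exists x. split; auto. apply (le_ml L HL).
          - intros a b' Hab [g [Hg Hle]]. exists g; split; auto. eapply (le_trans L HL); eauto.
          - intros a b' [g1 [Hg1 H1]] [g2 [Hg2 H2]]. exists (M g1 g2). split; auto.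
            apply (le_glb L HL).
            + eapply (le_trans L HL); [|exact H1]. apply (le_mm L HL); [apply (le_ml L HL)|apply (le_refl L HL)].
            + eapply (le_trans L HL); [|exact H2]. apply (le_mm L HL); [apply (le_mr L HL)|apply (le_refl L HL)].
          - intros x [g [Hg Hle]] Hk. apply Hn. exists g. split; auto. eapply Kdn; eauto. }
        assert (E := Hmax (exist _ Gd HGd)). simpl in E.
        assert (HGGd : forall x, G x -> Gd x).
        { intros x Hx. exists x. split; auto. apply (le_ml L HL). }
        specialize (E HGGd). inversion E as [E'].
        apply Hd. assert (Gd d) as Hd' by (exists o; split; [apply GF, F1|]; rewrite (mC L HL), (m1 L HL); apply (le_refl L HL)).
        rewrite E' in Hd'. exact Hd'. }
      destruct (Hext b Hb) as [g1 [Hg1 K1]]. destruct (Hext c Hc) as [g2 [Hg2 K2]].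
      apply (GK (M (M g1 g2) (J b c))).
      * apply Gm; auto.
      * rewrite (mdist L HL). apply Kj.
        -- eapply Kdn; [|exact K1]. apply (le_mm L HL); [apply (le_ml L HL)|apply (le_refl L HL)].
        -- eapply Kdn; [|exact K2]. apply (le_mm L HL); [apply (le_mr L HL)|apply (le_refl L HL)].
Qed.

Lemma cofact r a b : prime_filter L r -> r (D a b) ->
  exists q, prime_filter L q /\ (forall x, q x -> r x) /\ q a /\ ~ q b.
Proof.
  intros Hr Hab.
  destruct (pit (fun x => le a x) (fun x => exists c, ~ r c /\ le x (J c b))) as [q [Hq [HF HK]]].
  - apply (le_1 L HL).
  - intros; eapply (le_trans L HL); eauto.
  - intros; apply (le_glb L HL); auto.
  - exists z. split; [apply pf_0; auto|apply (le_0 L HL)].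
  - intros x y Hxy [c [Hc Hle]]. exists c; split; auto. eapply (le_trans L HL); eauto.
  - intros x y [c1 [Hc1 H1]] [c2 [Hc2 H2]]. exists (J c1 c2). split.
    + intro h. destruct (pf_j r c1 c2 Hr h); auto.
    + apply (le_lub L HL).
      * eapply (le_trans L HL); [exact H1|]. apply (le_jj L HL); [apply (le_jl L HL)|apply (le_refl L HL)].
      * eapply (le_trans L HL); [exact H2|]. apply (le_jj L HL); [apply (le_jr L HL)|apply (le_refl L HL)].
  - intros x Hax [c [Hc Hle]]. apply Hc. eapply pf_up; eauto. apply (dif_iff L HL).
    rewrite (jC L HL). eapply (le_trans L HL); eauto.
  - exists q. split; auto. split; [|split].
    + intros x Hx. apply NNPP. intro Hn. apply (HK x Hx). exists x. split; auto. apply (le_jl L HL).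
    + apply HF, (le_refl L HL).
    + intro Hb. apply (HK b Hb). exists z. split; [apply pf_0; auto|]. apply (le_jr L HL).
Qed.

Lemma lemmaH N : forall p, prime_filter L p -> ~ height_le L N p ->
  exists e, p e /\ forall r, prime_filter L r -> r e -> ~ height_le L N r.
Proof.
  induction N as [|n IH]; intros p Hp Hh.
  - destruct (classic (exists q, prime_filter L q /\ sincl q p)) as [[q [Hq [Hqp [x [Hpx Hqx]]]]]|Hn];
      [|exfalso; apply Hh; intros q Hq Hs; apply Hn; eauto].
    assert (Hq1 : q (D o x)).
    { destruct (pf_le q o x Hq (pf_1 q Hq)); tauto. }
    exists (M x (D o x)). split; [apply pf_m; auto|].
    intros r Hr He Hr0.
    assert (r x) by (eapply pf_up; [exact Hr| apply (le_ml L HL)|exact He]).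
    assert (r (D o x)) by (eapply pf_up; [exact Hr| apply (le_mr L HL)|exact He]).
    destruct (cofact r o x Hr) as [q' [Hq' [Hq'r [_ Hq'x]]]]; auto.
    apply (Hr0 q' Hq'). split; auto. exists x; auto.
  - destruct (classic (exists q, prime_filter L q /\ sincl q p /\ ~ height_le L n q)) as
      [[q [Hq [[Hqp [x [Hpx Hqx]]] Hqh]]]|Hn];
      [|exfalso; apply Hh; intros q Hq Hs; apply NNPP; intro; apply Hn; eauto].
    destruct (IH q Hq Hqh) as [e' [He' Hall]].
    assert (Hq1 : q (D e' x)).
    { destruct (pf_le q e' x Hq He'); tauto. }
    exists (M x (D e' x)). split; [apply pf_m; auto|].
    intros r Hr He Hr0.
    assert (r x) by (eapply pf_up; [exact Hr| apply (le_ml L HL)|exact He]).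
    assert (r (D e' x)) by (eapply pf_up; [exact Hr| apply (le_mr L HL)|exact He]).
    destruct (cofact r e' x Hr) as [q' [Hq' [Hq'r [Hq'e Hq'x]]]]; auto.
    apply (Hall q' Hq' Hq'e). apply (Hr0 q' Hq'). split; auto. exists x; auto.
Qed.

Lemma heightH N p : prime_filter L p -> (forall x, p x -> codim_le L x N) -> height_le L N p.
Proof.
  intros Hp H. apply NNPP. intro Hn. destruct (lemmaH N p Hp Hn) as [e [He Hall]].
  destruct (H e He) as [r [Hr [Hre Hrh]]]. exact (Hall r Hr Hre Hrh).
Qed.

Definition ideal_ok (I : T -> Prop) := is_ideal L I.

Lemma closed_to_prime I a N : is_ideal L I -> ~ I a ->
  (forall y, I y -> codim_le L (D a y) N) ->
  exists p, prime_filter L p /\ (forall x, p x -> ~ I x) /\ p a /\ height_le L N p.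
Proof.
  intros [I0 [Idn Ij]] Ha HN.
  destruct (pit (fun x => exists y, I y /\ le (D a y) x)
                (fun x => exists y j, I y /\ ~ codim_le L j N /\ le x (J y j))) as [p [Hp [HF HK]]].
  - exists z. split; auto. apply (le_1 L HL).
  - intros x x' Hxx' [y [Hy Hle]]. exists y; split; auto. eapply (le_trans L HL); eauto.
  - intros x x' [y1 [Hy1 H1]] [y2 [Hy2 H2]]. exists (J y1 y2). split; auto.
    apply (le_glb L HL).
    + eapply (le_trans L HL); [|exact H1]. apply (dif_anti L HL), (le_jl L HL).
    + eapply (le_trans L HL); [|exact H2]. apply (dif_anti L HL), (le_jr L HL).
  - exists z, z. split; auto. split; [apply codim_z|]. apply (le_0 L HL).
  - intros x x' Hxx' [y [j [Hy [Hj Hle]]]]. exists y, j. split; auto. split; auto. eapply (le_trans L HL); eauto.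
  - intros x x' [y1 [j1 [Hy1 [Hj1 H1]]]] [y2 [j2 [Hy2 [Hj2 H2]]]].
    exists (J y1 y2), (J j1 j2). split; auto. split.
    + intro h. destruct (codim_join _ _ _ h); auto.
    + apply (le_lub L HL).
      * eapply (le_trans L HL); [exact H1|]. apply (le_jj L HL); [apply (le_jl L HL)|apply (le_jl L HL)].
      * eapply (le_trans L HL); [exact H2|]. apply (le_jj L HL); [apply (le_jr L HL)|apply (le_jr L HL)].
  - intros x [y' [Hy' H1]] [y [j [Hy [Hj H2]]]]. apply Hj.
    apply codim_up with (D a (J y' y)); [|apply HN; auto].
    apply (dif_iff L HL). rewrite <- (jA L HL). apply (dif_iff L HL).
    eapply (le_trans L HL); eauto.
  - exists p. split; auto. split; [|split].
    + intros x Hx Ix. apply (HK x Hx). exists x, z. split; auto. split; [apply codim_z|]. apply (le_jl L HL).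
    + apply HF. exists z. split; auto. apply (dif_lea L HL).
    + apply heightH; auto. intros x Hx. apply NNPP. intro Hn. apply (HK x Hx). exists z, x.
      split; auto. split; auto. apply (le_jr L HL).
Qed.

End Prime.

Section Quot.
Context {T : Type} (L : CoHOps T) (HL : is_coHeyting L) (I : T -> Prop) (HI : is_ideal L I).

Local Notation J := (cjoin L).
Local Notation M := (cmeet L).
Local Notation D := (cdiff L).
Local Notation z := (cbot L).
Local Notation o := (ctop L).
Local Notation le := (cle L).
Local Notation Q := (quot_ops L I).
Local Notation qcls := (qcls L I).
Local Notation qrep := (qrep L I).
Local Notation cong := (cong L I).

Lemma I0 : I z. Proof. apply HI. Qed.
Lemma Idn a b : le a b -> I b -> I a. Proof. apply HI. Qed.
Lemma Ij a b : I a -> I b -> I (J a b). Proof. apply HI. Qed.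

Lemma rearr x i y j : le (J (J x i) (J y j)) (J (J x y) (J i j)).
Proof.
  apply (le_lub L HL); apply (le_lub L HL).
  - apply (le_jl' L HL), (le_jl L HL).
  - apply (le_jr' L HL), (le_jl L HL).
  - apply (le_jl' L HL), (le_jr L HL).
  - apply (le_jr' L HL), (le_jr L HL).
Qed.

Lemma cong_char a b : cong a b <-> exists i, I i /\ le a (J b i) /\ le b (J a i).
Proof.
  split.
  - intro H. exists (symd L a b). split; auto. split; [apply (symd_le L HL)|].
    rewrite (symd_C L HL). apply (symd_le L HL).
  - intros [i [Hi [H1 H2]]]. unfold Defs.cong. apply Idn with i; auto. unfold symd.
    apply (le_lub L HL); apply (dif_iff L HL); auto.
Qed.

Lemma cong_refl a : cong a a.
Proof. unfold Defs.cong. rewrite (symd_aa L HL). apply I0. Qed.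
Lemma cong_sym a b : cong a b -> cong b a.
Proof. unfold Defs.cong. rewrite (symd_C L HL). auto. Qed.
Lemma cong_trans a b c : cong a b -> cong b c -> cong a c.
Proof.
  rewrite !cong_char. intros [i [Hi [H1 H2]]] [j [Hj [H3 H4]]].
  exists (J i j). split; [apply Ij; auto|split].
  - eapply (le_trans L HL); [exact H1|]. eapply (le_trans L HL); [apply (le_jj L HL); [exact H3|apply (le_refl L HL)]|].
    apply (le_lub L HL); [apply (le_lub L HL)|].
    + apply (le_jl L HL).
    + apply (le_jr' L HL), (le_jr L HL).
    + apply (le_jr' L HL), (le_jl L HL).
  - eapply (le_trans L HL); [exact H4|]. eapply (le_trans L HL); [apply (le_jj L HL); [exact H2|apply (le_refl L HL)]|].
    apply (le_lub L HL); [apply (le_lub L HL)|].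
    + apply (le_jl L HL).
    + apply (le_jr' L HL), (le_jl L HL).
    + apply (le_jr' L HL), (le_jr L HL).
Qed.

Lemma sig_ext (X Y : quot L I) : proj1_sig X = proj1_sig Y -> X = Y.
Proof. destruct X as [x hx], Y as [y hy]. simpl. intro E. subst y. f_equal. apply proof_irrelevance. Qed.

Lemma qcls_eq a b : qcls a = qcls b <-> cong a b.
Proof.
  split.
  - intro E. apply (f_equal (@proj1_sig _ _)) in E. simpl in E.
    assert (H := cong_refl b). rewrite <- E in H. exact H.
  - intro H. apply sig_ext. simpl. apply functional_extensionality. intro x.
    apply propositional_extensionality. split; intro h.
    + eapply cong_trans; [apply cong_sym; exact H|exact h].
    + eapply cong_trans; [exact H|exact h].
Qed.

Lemma qcls_qrep X : qcls (qrep X) = X.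
Proof.
  apply sig_ext. unfold Defs.qrep. destruct (constructive_indefinite_description _ _) as [r Hr].
  simpl. symmetry. exact Hr.
Qed.

Lemma qrep_cong a : cong (qrep (qcls a)) a.
Proof. apply qcls_eq. apply qcls_qrep. Qed.

Lemma cong_join a a' b b' : cong a a' -> cong b b' -> cong (J a b) (J a' b').
Proof.
  rewrite !cong_char. intros [i [Hi [H1 H2]]] [j [Hj [H3 H4]]].
  exists (J i j). split; [apply Ij; auto|split].
  - eapply (le_trans L HL); [apply (le_jj L HL); eauto|apply rearr].
  - eapply (le_trans L HL); [apply (le_jj L HL); eauto|apply rearr].
Qed.
Lemma cong_meet a a' b b' : cong a a' -> cong b b' -> cong (M a b) (M a' b').
Proof.
  rewrite !cong_char. intros [i [Hi [H1 H2]]] [j [Hj [H3 H4]]].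
  exists (J i j). split; [apply Ij; auto|split].
  - eapply (le_trans L HL); [apply (le_mm L HL); eauto|apply (le_mj L HL)].
  - eapply (le_trans L HL); [apply (le_mm L HL); eauto|apply (le_mj L HL)].
Qed.
Lemma diff_aux a a' b b' i j : le a (J a' i) -> le b' (J b j) ->
  le (D a b) (J (D a' b') (J i j)).
Proof.
  intros H1 H2. apply (dif_iff L HL).
  eapply (le_trans L HL); [exact H1|].
  eapply (le_trans L HL); [apply (le_jj L HL); [apply (dif_le L HL a' b')|apply (le_refl L HL)]|].
  eapply (le_trans L HL); [apply (le_jj L HL); [apply (le_jj L HL); [exact H2|apply (le_refl L HL)]|apply (le_refl L HL)]|].
  apply (le_lub L HL); [apply (le_lub L HL); [apply (le_lub L HL)|]|].
  - apply (le_jl L HL).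
  - apply (le_jr' L HL), (le_jr' L HL), (le_jr L HL).
  - apply (le_jr' L HL), (le_jl L HL).
  - apply (le_jr' L HL), (le_jr' L HL), (le_jl L HL).
Qed.
Lemma cong_diff a a' b b' : cong a a' -> cong b b' -> cong (D a b) (D a' b').
Proof.
  rewrite !cong_char. intros [i [Hi [H1 H2]]] [j [Hj [H3 H4]]].
  exists (J i j). split; [apply Ij; auto|split].
  - apply diff_aux; auto.
  - apply diff_aux; auto.
Qed.

Lemma qj a b : cjoin Q (qcls a) (qcls b) = qcls (J a b).
Proof. simpl. apply qcls_eq. apply cong_join; apply qrep_cong. Qed.
Lemma qm a b : cmeet Q (qcls a) (qcls b) = qcls (M a b).
Proof. simpl. apply qcls_eq. apply cong_meet; apply qrep_cong. Qed.
Lemma qd a b : cdiff Q (qcls a) (qcls b) = qcls (D a b).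
Proof. simpl. apply qcls_eq. apply cong_diff; apply qrep_cong. Qed.
Lemma qsymd a b : symd Q (qcls a) (qcls b) = qcls (symd L a b).
Proof. unfold symd at 1. rewrite !qd, qj. reflexivity. Qed.
Lemma qle a b : cle Q (qcls a) (qcls b) <-> cong (J a b) b.
Proof. unfold cle at 1. rewrite qj. apply qcls_eq. Qed.

Definition goodp (p : T -> Prop) := prime_filter L p /\ forall x, p x -> ~ I x.

Lemma goodp_resp p a b : goodp p -> cong a b -> p a -> p b.
Proof.
  intros [Hp Hd] Hc Ha. assert (H : p (J b (symd L a b))) by (eapply pf_up; eauto; apply (symd_le L HL)).
  destruct (pf_j L p _ _ Hp H); auto. exfalso; eapply Hd; eauto.
Qed.

Lemma phi_prime P : prime_filter Q P -> goodp (fun a => P (qcls a)).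
Proof.
  intros [P1 [P0 [Pup [Pm Pj]]]]. split; [repeat split|].
  - exact P1.
  - exact P0.
  - intros a b Hab Ha. apply (Pup (qcls a)); auto. apply qle. rewrite Hab. apply cong_refl.
  - intros a b Ha Hb. rewrite <- qm. auto.
  - intros a b H. rewrite <- qj in H. auto.
  - intros x Hx Ix. apply P0. replace (cbot Q) with (qcls x); auto.
    simpl. apply qcls_eq. unfold Defs.cong. rewrite (symd_a0 L HL). exact Ix.
Qed.

Lemma psi_prime p : goodp p -> prime_filter Q (fun X => p (qrep X)).
Proof.
  intros Hg. pose proof Hg as [Hp Hd]. repeat split.
  - simpl. eapply goodp_resp; [exact Hg|apply cong_sym, qrep_cong|apply (pf_1 L p Hp)].
  - simpl. intro h. apply (pf_0 L p Hp). eapply goodp_resp; [exact Hg|apply qrep_cong|exact h].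
  - intros X Y Hle HX. rewrite <- (qcls_qrep X), <- (qcls_qrep Y) in Hle.
    apply qle in Hle. eapply goodp_resp; [exact Hg|exact Hle|].
    eapply pf_up; [exact Hp|apply (le_jl L HL)|exact HX].
  - intros X Y HX HY. simpl. eapply goodp_resp; [exact Hg|apply cong_sym, qrep_cong|]. apply (pf_m L p); auto.
  - intros X Y H. simpl in H. eapply goodp_resp in H; [|exact Hg|apply qrep_cong]. apply (pf_j L p); auto.
Qed.

Lemma phi_psi p : goodp p -> (fun a => p (qrep (qcls a))) = p.
Proof.
  intro Hg. apply functional_extensionality. intro a. apply propositional_extensionality.
  split; intro h; eapply goodp_resp; eauto; [apply qrep_cong|apply cong_sym, qrep_cong].
Qed.

Lemma height_corr n : forall P, prime_filter Q P ->
  (height_le Q n P <-> height_le L n (fun a => P (qcls a))).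
Proof.
  induction n as [|n IH]; intros P HP; split.
  - intros H q Hq [Hs [x [Hx1 Hx2]]].
    assert (Hg : goodp q) by (split; auto; intros y Hy; apply (phi_prime P HP); auto).
    apply (H _ (psi_prime q Hg)). split.
    + intros X HX. rewrite <- (qcls_qrep X). apply Hs. exact HX.
    + exists (qcls x). split; auto. intro h. apply Hx2. eapply goodp_resp; eauto. apply qrep_cong.
  - intros H Q' HQ' [Hs [X [HX1 HX2]]].
    apply (H _ (proj1 (phi_prime Q' HQ'))). split.
    + intros a Ha. apply Hs. exact Ha.
    + exists (qrep X). rewrite qcls_qrep. auto.
  - intros H q Hq [Hs [x [Hx1 Hx2]]].
    assert (Hg : goodp q) by (split; auto; intros y Hy; apply (phi_prime P HP); auto).
    assert (H' := H _ (psi_prime q Hg)). simpl in H'. rewrite <- (phi_psi q Hg).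
    apply (IH _ (psi_prime q Hg)). apply H'. split.
    + intros X HX. rewrite <- (qcls_qrep X). apply Hs. exact HX.
    + exists (qcls x). split; auto. intro h. apply Hx2. eapply goodp_resp; eauto. apply qrep_cong.
  - intros H Q' HQ' [Hs [X [HX1 HX2]]].
    apply (IH _ HQ'). apply (H _ (proj1 (phi_prime Q' HQ'))). split.
    + intros a Ha. apply Hs. exact Ha.
    + exists (qrep X). rewrite qcls_qrep. auto.
Qed.

Lemma codim_corr a n : codim_le Q (qcls a) n <-> exists p, goodp p /\ p a /\ height_le L n p.
Proof.
  split.
  - intros [P [HP [Ha Hh]]]. exists (fun a => P (qcls a)). split; [apply phi_prime; auto|split; auto].
    apply height_corr; auto.
  - intros [p [Hg [Ha Hh]]]. exists (fun X => p (qrep X)). split; [apply psi_prime; auto|split].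
    + eapply goodp_resp; eauto. apply cong_sym, qrep_cong.
    + apply height_corr; [apply psi_prime; auto|]. rewrite phi_psi; auto.
Qed.

Lemma QH : Hausdorff Q <-> forall a, ~ I a -> exists n p, goodp p /\ p a /\ height_le L n p.
Proof.
  rewrite hausdorff_char.
  - split.
    + intros H a Ha. destruct (H (qcls a) (qcls z)) as [n Hn].
      * intro E. apply qcls_eq in E. unfold Defs.cong in E. rewrite (symd_a0 L HL) in E. auto.
      * rewrite qsymd, (symd_a0 L HL), codim_corr in Hn. exists n; auto.
    + intros H X Y HXY. rewrite <- (qcls_qrep X), <- (qcls_qrep Y) in *.
      set (x := qrep X) in *. set (y := qrep Y) in *.
      destruct (H (symd L x y)) as [n [p Hp]].
      * intro h. apply HXY. apply qcls_eq. exact h.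
      * exists n. rewrite qsymd, codim_corr. eauto.
  - intros X Y W n. rewrite <- (qcls_qrep X), <- (qcls_qrep Y), <- (qcls_qrep W), !qsymd, !codim_corr.
    intros [p [Hg [Hp Hh]]]. assert (Hj : p (J (symd L (qrep X) (qrep Y)) (symd L (qrep Y) (qrep W)))).
    { eapply pf_up; [apply Hg| apply (symd_tri L HL)|exact Hp]. }
    destruct (pf_j L p _ _ (proj1 Hg) Hj); [left|right]; eauto.
  - intros X Y n. rewrite <- (qcls_qrep X), <- (qcls_qrep Y), !qsymd, (symd_C L HL). auto.
  - intros X n. rewrite <- (qcls_qrep X), qsymd, (symd_aa L HL), codim_corr.
    intros [p [Hg [Hp _]]]. exact (pf_0 L p (proj1 Hg) Hp).
Qed.

End Quot.

Lemma L_hausdorff_char {T : Type} (L : CoHOps T) (HL : is_coHeyting L) :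
  Hausdorff L <-> forall x y, x <> y -> exists n, codim_le L (symd L x y) n.
Proof.
  apply hausdorff_char.
  - intros x y w n H. apply (codim_join L). eapply (codim_up L); [apply (symd_tri L HL)|exact H].
  - intros x y n. rewrite (symd_C L HL). auto.
  - intros x n. rewrite (symd_aa L HL). apply (codim_z L).
Qed.

Theorem proposition4p4 (T : Type) (L : CoHOps T) :
  is_coHeyting L -> Hausdorff L ->
  (forall I : T -> Prop, is_ideal L I ->
     (Hausdorff (quot_ops L I) <-> cclosed L I)) /\
  (forall a : T, Hausdorff (quot_ops L (principal_ideal L a))).
Proof.
  intros HL HH.
  assert (Part1 : forall I : T -> Prop, is_ideal L I -> (Hausdorff (quot_ops L I) <-> cclosed L I)).
  { intros I HI. rewrite (QH L HL I HI), closed_char. split.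
    - intros H x Hx. destruct (H x Hx) as [n [p [[Hp Hd] [Hpx Hh]]]]. exists n.
      intros y Hy Iy. assert (Hj : p (cjoin L y (symd L x y))) by (eapply pf_up; [exact Hp|apply (symd_le L HL)|exact Hpx]).
      destruct (pf_j L p _ _ Hp Hj) as [h|h]; [exact (Hd y h Iy)|].
      apply Hy. exists p; auto.
    - intros H a Ha. destruct (H a Ha) as [N HN].
      destruct (closed_to_prime L HL I a N HI Ha) as [p [Hp [Hd [Hpa Hh]]]].
      + intros y Iy. set (y' := cmeet L y a).
        assert (Iy' : I y') by (apply (Idn L I HI) with y; auto; apply (le_ml L HL)).
        assert (Hc : codim_le L (symd L a y') N) by (apply NNPP; intro h; exact (HN y' h Iy')).
        unfold symd in Hc. rewrite ((dif_z L HL) y' a) in Hc by apply (le_mr L HL).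
        rewrite (j0 L HL) in Hc. eapply (codim_up L); [|exact Hc].
        apply (dif_iff L HL).
        apply (le_trans L HL) with (cmeet L a a); [apply (proj2 (le_meet L HL a (cmeet L a a))); rewrite (mid L HL); apply (mid L HL)|].
        eapply (le_trans L HL); [apply (le_mm L HL); [apply (le_refl L HL)|apply (dif_le L HL a y)]|].
        rewrite (mdist L HL). apply (le_jj L HL); [rewrite (mC L HL); apply (le_refl L HL)|apply (le_mr L HL)].
      + exists N, p. split; [split|]; auto. }
  split; [exact Part1|].
  intros c. apply Part1.
  - repeat split.
    + apply (le_0 L HL).
    + intros a b Hab Hb. unfold principal_ideal in *. eapply (le_trans L HL); eauto.
    + intros a b Ha Hb. apply (le_lub L HL); auto.
  - apply closed_char. intros x Hx. unfold principal_ideal in Hx.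
    rewrite (L_hausdorff_char L HL) in HH.
    destruct (HH (cdiff L x c) (cbot L)) as [n Hn].
    + intro E. apply Hx. assert (E' : cle L (cdiff L x c) (cbot L)) by (rewrite E; apply (le_refl L HL)).
      apply (dif_iff L HL) in E'. rewrite (j0 L HL) in E'. exact E'.
    + rewrite (symd_a0 L HL) in Hn. exists n. intros y Hy Hyc. apply Hy.
      eapply (codim_up L); [|exact Hn]. unfold symd.
      eapply (le_trans L HL); [apply (dif_anti L HL); exact Hyc|apply (le_jl L HL)].
Qed.
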